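(* Let $(R,\mathfrak{m})$ be a Noetherian local ring, $M$ a finitely generated $R$-module, $S \subseteq M$ a subset, and $\mathscr{E}$ an $R$-submodule of $\mathrm{Hom}_R(M,R)$. Let $I^{\mathscr{E}}(S,M) := \{y \in \langle S \rangle \mid f(y) \in \mathfrak{m} \text{ for all } f \in \mathscr{E}\}$, an $R$-submodule of $\langle S\rangle$. Then $\delta^{\mathscr{E}}_\mathfrak{m}(S,M) = \lambda_R(\langle S\rangle / I^{\mathscr{E}}(S,M))$, where $\lambda_R$ denotes length.
   Context: $\langle S\rangle$ is the submodule generated by $S$. A free $\mathscr{E}$-summand of $M$ is a direct summand $F$ (with complement $G$) of $M$, $F \cong R^n$, such that each coordinate of the projection $M \to F \cong R^n$ along $G$ lies in $\mathscr{E}$. $\delta^{\mathscr{E}}_\mathfrak{m}(S,M)$ is the largest integer $n\ge 0$ such that there is a free $\mathscr{E}$-summand of $M$ of rank $n$ contained in $\langle S\rangle$. *)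

(* Defs.v *)
From mathcomp Require Import all_boot all_algebra.
Set Implicit Arguments.
Unset Strict Implicit.
Unset Printing Implicit Defensive.
Import GRing.Theory.
Local Open Scope ring_scope.

Section Defs.
Variable R : comUnitRingType.

(* (R, m) is local: the non-units form an ideal, which is then the unique
   maximal ideal m. *)
Definition maxideal : R -> Prop := fun x => x \isn't a GRing.unit.
Definition is_local : Prop :=
  forall x y : R, maxideal x -> maxideal y -> maxideal (x + y).

Variable V : lmodType R.

Definition submod (P : V -> Prop) : Prop :=
  [/\ P 0, (forall x y, P x -> P y -> P (x + y)) & (forall a x, P x -> P (a *: x))].

Definition genmod (S : V -> Prop) : V -> Prop := fun x =>
  exists (n : nat) (v : 'I_n -> V) (c : 'I_n -> R),
    (forall i, S (v i)) /\ x = \sum_(i < n) c i *: v i.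

Definition fin_gen (P : V -> Prop) : Prop :=
  exists (n : nat) (v : 'I_n -> V),
    forall x, P x <-> genmod (fun y => exists i, y = v i) x.

(* Length of the quotient N / I for submodules I <= N of V, via the lattice
   correspondence: sup of lengths k of strict chains I = N_0 < ... < N_k = N. *)
Definition strict_chain (I N : V -> Prop) (k : nat) : Prop :=
  exists C : nat -> (V -> Prop),
    [/\ forall j, submod (C j),
        (forall x, C 0%N x <-> I x),
        (forall x, C k x <-> N x),
        (forall j, (j < k)%N -> forall x, C j x -> C j.+1 x) &
        (forall j, (j < k)%N -> exists x, C j.+1 x /\ ~ C j x)].

Definition quot_length (N I : V -> Prop) (k : nat) : Prop :=
  strict_chain I N k /\ (forall k', strict_chain I N k' -> (k' <= k)%N).

End Defs.

Definition noetherian (R : comUnitRingType) : Prop :=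
  forall I : R^o -> Prop, submod I -> fin_gen I.

Section Hom.
Variables (R : comUnitRingType) (M : lmodType R).

Definition is_hom (f : M -> R) : Prop :=
  forall a x y, f (a *: x + y) = a * f x + f y.

Definition hom_submod (E : (M -> R) -> Prop) : Prop :=
  [/\ forall f, E f -> is_hom f,
      E (fun _ => 0),
      (forall f g, E f -> E g -> E (fun x => f x + g x)) &
      (forall a f, E f -> E (fun x => a * f x))].

(* F is a free E-summand of M of rank n: F is a direct summand with
   complement G, F is free with basis e_1..e_n (i.e. F ~ R^n), and each
   coordinate p_i of the projection M -> F ~ R^n along G lies in E. *)
Definition free_E_summand (E : (M -> R) -> Prop) (F : M -> Prop) (n : nat) :=
  exists (G : M -> Prop) (e : 'I_n -> M) (p : 'I_n -> M -> R),
    submod F /\ submod G /\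
    (forall x, F x -> G x -> x = 0) /\
    (forall x, exists f g, [/\ F f, G g & x = f + g]) /\
    (forall i, F (e i)) /\
    (forall x, F x -> exists c : 'I_n -> R, x = \sum_(i < n) c i *: e i) /\
    (forall c : 'I_n -> R, \sum_(i < n) c i *: e i = 0 -> forall i, c i = 0) /\
    (forall x, G (x - \sum_(i < n) p i x *: e i)) /\
    (forall i, E (p i)).

Definition delta_is (E : (M -> R) -> Prop) (S : M -> Prop) (d : nat) : Prop :=
  (exists F, free_E_summand E F d /\ (forall x, F x -> genmod S x)) /\
  (forall n F, free_E_summand E F n -> (forall x, F x -> genmod S x) -> (n <= d)%N).

Definition IE (E : (M -> R) -> Prop) (S : M -> Prop) : M -> Prop :=
  fun y => genmod S y /\ forall f, E f -> maxideal (f y).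

End Hom.

(* Main.v *)
Require Import Defs.
From mathcomp Require Import all_boot all_algebra.
From Stdlib Require Import Classical IndefiniteDescription FunctionalExtensionality.
Set Implicit Arguments. Unset Strict Implicit. Unset Printing Implicit Defensive.
Import GRing.Theory.
Local Open Scope ring_scope.

Section Aux.
Variables (R : comUnitRingType) (M : lmodType R).

Lemma hom0 (f : M -> R) : is_hom f -> f 0 = 0.
Proof. move=> hf; have h := hf 1 0 0; rewrite scaler0 addr0 mul1r in h. by apply: (@addrI _ (f 0)); rewrite addr0 -h. Qed.
Lemma homD (f : M -> R) x y : is_hom f -> f (x + y) = f x + f y.
Proof. by move=> hf; rewrite -[x in LHS]scale1r hf mul1r. Qed.
Lemma homZ (f : M -> R) a x : is_hom f -> f (a *: x) = a * f x.
Proof. by move=> hf; rewrite -[_ *: x]addr0 hf hom0 // addr0. Qed.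
Lemma homN (f : M -> R) x : is_hom f -> f (- x) = - f x.
Proof. by move=> hf; rewrite -scaleN1r homZ // mulN1r. Qed.
Lemma homB (f : M -> R) x y : is_hom f -> f (x - y) = f x - f y.
Proof. by move=> hf; rewrite homD // homN. Qed.
Lemma hom_sum (f : M -> R) (I : Type) (r : seq I) (P : pred I) (F : I -> M) :
  is_hom f -> f (\sum_(i <- r | P i) F i) = \sum_(i <- r | P i) f (F i).
Proof. move=> hf; apply: (big_morph f (fun x y => homD x y hf) (hom0 hf)). Qed.

Lemma submod0 (Q : M -> Prop) : submod Q -> Q 0. Proof. by case. Qed.
Lemma submodD (Q : M -> Prop) x y : submod Q -> Q x -> Q y -> Q (x + y).
Proof. by case=> _ h _; apply: h. Qed.
Lemma submodZ (Q : M -> Prop) a x : submod Q -> Q x -> Q (a *: x).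
Proof. by case=> _ _ h; apply: h. Qed.
Lemma submodN (Q : M -> Prop) x : submod Q -> Q x -> Q (- x).
Proof. by move=> hQ hx; rewrite -scaleN1r; apply: submodZ. Qed.
Lemma submodB (Q : M -> Prop) x y : submod Q -> Q x -> Q y -> Q (x - y).
Proof. by move=> hQ hx hy; apply: submodD => //; apply: submodN. Qed.
Lemma submod_sum (Q : M -> Prop) (I : Type) (r : seq I) (P : pred I) (F : I -> M) :
  submod Q -> (forall i, P i -> Q (F i)) -> Q (\sum_(i <- r | P i) F i).
Proof. move=> hQ hF; apply: big_ind => //; [exact: submod0 | move=> x y; exact: submodD]. Qed.

Lemma submod_gen (S : M -> Prop) : submod (genmod S).
Proof.
split.
- by exists 0%N, (fun _ => 0), (fun _ => 0); split; [case | rewrite big_ord0].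
- move=> x y [n1 [v1 [c1 [h1 ->]]]] [n2 [v2 [c2 [h2 ->]]]].
  exists (n1 + n2)%N, (fun i => match split i with inl a => v1 a | inr b => v2 b end),
    (fun i => match split i with inl a => c1 a | inr b => c2 b end); split.
  + by move=> i; case: (split i).
  + rewrite big_split_ord /=; congr (_ + _); apply: eq_bigr => i _.
    * by rewrite (unsplitK (inl i)).
    * by rewrite (unsplitK (inr i)).
- move=> a x [n [v [c [h ->]]]]; exists n, v, (fun i => a * c i); split => //.
  by rewrite scaler_sumr; apply: eq_bigr => i _; rewrite scalerA.
Qed.

Lemma gen_in (S : M -> Prop) x : S x -> genmod S x.
Proof. by move=> hx; exists 1%N, (fun _ => x), (fun _ => 1); split => //; rewrite big_ord1 scale1r. Qed.

Lemma gen_min (S Q : M -> Prop) x : submod Q -> (forall y, S y -> Q y) -> genmod S x -> Q x.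
Proof.
move=> hQ hS [n [v [c [h ->]]]]; apply: submod_sum => // i _; apply: submodZ => //; exact: hS.
Qed.

Lemma sum_delta (V : zmodType) (k : nat) (F : nat -> V) j : (j < k)%N ->
  \sum_(i < k) (if (i == j :> nat) then F i else 0) = F j.
Proof.
move=> hj; rewrite (bigD1 (Ordinal hj)) //= eqxx big1 ?addr0 // => i.
by rewrite -val_eqE /= => /negbTE ->.
Qed.

Lemma sum_ltn (V : zmodType) (F : nat -> V) j d : (j <= d)%N ->
  \sum_(i < d) (if (i < j)%N then F i else 0) = \sum_(i < j) F i.
Proof.
elim: d => [|d IH] hj; first by move: hj; rewrite leqn0 => /eqP ->; rewrite !big_ord0.
case: (ltngtP j d.+1) hj => // [hjd _|-> _].
- by rewrite big_ord_recr /= ltnNge -ltnS hjd /= addr0 IH.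
- by apply: eq_bigr => i _; rewrite ltn_ord.
Qed.

Lemma sum_delta_ord (V : lmodType R) k (w : 'I_k -> V) (i : 'I_k) :
  \sum_(l < k) (l == i :> nat)%:R *: w l = w i.
Proof.
rewrite (bigD1 i) //= eqxx scale1r big1 ?addr0 // => l hl.
have -> : (l == i :> nat) = (l == i) by []. by rewrite (negbTE hl) scale0r.
Qed.

Lemma nu0 : maxideal (0 : R). Proof. by rewrite /maxideal unitr0. Qed.
Lemma nu_mulr (a b : R) : maxideal a -> maxideal (a * b).
Proof. by rewrite /maxideal unitrM => /negbTE ->. Qed.
Lemma nu_mull (a b : R) : maxideal b -> maxideal (a * b).
Proof. by rewrite /maxideal unitrM => /negbTE ->; rewrite andbF. Qed.
Lemma nu_opp (a : R) : maxideal a -> maxideal (- a).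
Proof. by rewrite /maxideal unitrN. Qed.

End Aux.
Arguments submodZ [R M Q a x].
Arguments submod_sum [R M Q I r P F].

Section Main.
Variables (R : comUnitRingType) (M : lmodType R) (S : M -> Prop) (E : (M -> R) -> Prop).
Hypothesis hloc : is_local R.
Hypothesis hE : hom_submod E.

Lemma Ehom f : E f -> is_hom f. Proof. by case: hE => h _ _ _; apply: h. Qed.

Lemma E_comb f g a b : E f -> E g -> E (fun w => a * f w + b * g w).
Proof.
case: hE => _ _ hD hZ hf hg; apply: (hD (fun w => a * f w) (fun w => b * g w)); exact: hZ.
Qed.

Lemma E_lin k a g (f : nat -> M -> R) (b : nat -> R) : E g -> (forall j, (j < k)%N -> E (f j)) ->
  E (fun w => a * g w + \sum_(j < k) b j * f j w).
Proof.
elim: k a => [|k IH] a hg hf.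
- have -> : (fun w => a * g w + \sum_(j < 0) b j * f j w) = (fun w => a * g w + 0 * g w).
    by apply: functional_extensionality => w; rewrite big_ord0 mul0r.
  exact: E_comb.
- have -> : (fun w => a * g w + \sum_(j < k.+1) b j * f j w) =
     (fun w => 1 * (a * g w + \sum_(j < k) b j * f j w) + b k * f k w).
    by apply: functional_extensionality => w; rewrite big_ord_recr /= mul1r addrA.
  apply: E_comb; first by apply: IH => // j hj; apply: hf; apply: ltnW.
  exact: hf.
Qed.

Lemma IE_submod : submod (IE E S).
Proof.
split.
- split; first exact: submod0 (submod_gen S).
  move=> f Ef; rewrite hom0; [exact: nu0 | exact: Ehom].
- move=> x y [gx fx] [gy fy]; split; first exact: submodD (submod_gen S) gx gy.
  by move=> f Ef; rewrite homD; last exact: Ehom; apply: hloc; [apply: fx | apply: fy].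
- move=> a x [gx fx]; split; first exact: submodZ (submod_gen S) gx.
  by move=> f Ef; rewrite homZ; last exact: Ehom; apply: nu_mull; apply: fx.
Qed.

Lemma IE_nuZ a y : maxideal a -> genmod S y -> IE E S (a *: y).
Proof.
move=> ha hy; split; first exact: submodZ (submod_gen S) hy.
by move=> f Ef; rewrite homZ; last exact: Ehom; apply: nu_mulr.
Qed.

Definition indep k (x : nat -> M) : Prop :=
  (forall i, (i < k)%N -> genmod S (x i)) /\
  forall c : nat -> R, IE E S (\sum_(i < k) c i *: x i) -> forall i, (i < k)%N -> maxideal (c i).

Lemma indep_restr k x : indep k.+1 x -> indep k x.
Proof.
move=> [hg hc]; split; first by move=> i hi; apply: hg; apply: ltnW.
move=> c hIE i hi.
have := hc (fun i => if (i < k)%N then c i else 0) _ i (ltnW hi); rewrite hi; apply.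
rewrite big_ord_recr /= ltnn scale0r addr0.
by under eq_bigr => j _ do rewrite ltn_ord.
Qed.

Lemma dual k x : indep k x -> exists f : nat -> M -> R,
  (forall i, (i < k)%N -> E (f i)) /\
  forall i j, (i < k)%N -> (j < k)%N -> f i (x j) = (i == j)%:R.
Proof.
elim: k x => [|k IH] x hind; first by exists (fun _ _ => 0); split.
have [f [hfE hf]] := IH x (indep_restr hind).
set z := x k - \sum_(j < k) f j (x k) *: x j.
have hgz : genmod S z.
  apply: submodB; first exact: submod_gen.
    by apply: hind.1.
  apply: submod_sum; first exact: submod_gen.
  by move=> j _; apply: (submodZ (submod_gen S)); apply: (hind.1 j); exact: leqW (ltn_ord j).
have hz : ~ IE E S z.
  move=> hz.
  have hIE : IE E S (\sum_(i < k.+1) (fun i => if (i < k)%N then - f i (x k) else 1) i *: x i).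
    rewrite big_ord_recr /= ltnn scale1r.
    under eq_bigr => j _ do rewrite ltn_ord scaleNr.
    by rewrite sumrN addrC.
  by have := hind.2 (fun i => if (i < k)%N then - f i (x k) else 1) hIE k (ltnSn k); rewrite ltnn /maxideal unitr1.
have [g [Eg gz]] : exists g, E g /\ g z \is a GRing.unit.
  apply: NNPP => hn; apply: hz; split => // g Eg; rewrite /maxideal; apply/negP => hu; apply: hn; by exists g.
have hg := Ehom Eg.
set u := (g z)^-1.
set h := fun w => u * (g w - \sum_(j < k) g (x j) * f j w).
have hEh : E h.
  have -> : h = (fun w => u * g w + \sum_(j < k) (- (u * g (x j))) * f j w).
    apply: functional_extensionality => w; rewrite /h mulrBr mulr_sumr -sumrN.
    by congr (_ + _); apply: eq_bigr => j _; rewrite mulNr mulrA.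
  exact: (@E_lin k u g f (fun j => - (u * g (x j))) Eg hfE).
have hxj j : (j < k)%N -> h (x j) = 0.
  move=> hj; rewrite /h.
  have -> : \sum_(l < k) g (x l) * f l (x j) = \sum_(l < k) (if (l == j :> nat) then g (x l) else 0).
    apply: eq_bigr => l _; rewrite hf //.
    by case: (l == j :> nat); rewrite ?mulr1 ?mulr0.
  by rewrite (sum_delta (fun l => g (x l))) // subrr mulr0.
have hxk : h (x k) = 1.
  rewrite /h.
  have -> : g (x k) - \sum_(j < k) g (x j) * f j (x k) = g z.
    rewrite /z homB // hom_sum //; congr (_ - _); apply: eq_bigr => j _.
    by rewrite homZ // mulrC.
  by rewrite /u mulVr.
exists (fun i => if i == k then h else (fun w => f i w - f i (x k) * h w)); split.
- move=> i hi; case: eqP => [_ | hik] //.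
  have hik' : (i < k)%N by rewrite ltn_neqAle (introN eqP hik) -ltnS.
  have -> : (fun w => f i w - f i (x k) * h w) = (fun w => 1 * f i w + (- f i (x k)) * h w).
    by apply: functional_extensionality => w; rewrite mul1r mulNr.
  by apply: E_comb; [apply: hfE | ].
- move=> i j hi hj.
  case: (eqVneq i k) => [-> | hik]; case: (eqVneq j k) => [-> | hjk].
  + by rewrite hxk.
  + have hj' : (j < k)%N by rewrite ltn_neqAle hjk -ltnS.
    by rewrite hxj.
  + have hi' : (i < k)%N by rewrite ltn_neqAle hik -ltnS.
    rewrite hxk mulr1 subrr. have /eqP/negbTE -> : i <> k by apply/eqP. by [].
  + have hi' : (i < k)%N by rewrite ltn_neqAle hik -ltnS.
    have hj' : (j < k)%N by rewrite ltn_neqAle hjk -ltnS.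
    by rewrite hxj // mulr0 subr0 hf.
Qed.

Lemma build k x (f : nat -> M -> R) :
  (forall i, (i < k)%N -> genmod S (x i)) -> (forall i, (i < k)%N -> E (f i)) ->
  (forall i j, (i < k)%N -> (j < k)%N -> f i (x j) = (i == j)%:R) ->
  exists F, free_E_summand E F k /\ (forall y, F y -> genmod S y).
Proof.
move=> hx hfE hf.
have hh (i : 'I_k) : is_hom (f i) by apply: Ehom; apply: hfE.
have key (c : 'I_k -> R) (i : 'I_k) : f i (\sum_(l < k) c l *: x l) = c i.
  rewrite hom_sum //; under eq_bigr => l _ do rewrite homZ // hf //.
  rewrite (bigD1 i) //= eqxx mulr1 big1 ?addr0 // => l hl.
  have -> : (i == l :> nat) = (i == l) by [].
  by rewrite eq_sym (negbTE hl) mulr0.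
have hG y : forall i : 'I_k, f i (y - \sum_(l < k) f l y *: x l) = 0.
  by move=> i; rewrite homB // (key (fun l => f l y)) subrr.
exists (fun y => exists c : 'I_k -> R, y = \sum_(i < k) c i *: x i); split; last first.
  move=> y [c ->]; apply: (submod_sum (submod_gen S)) => i _.
  by apply: (submodZ (submod_gen S)); apply: hx.
exists (fun y => forall i : 'I_k, f i y = 0), (fun i : 'I_k => x i), (fun i : 'I_k => f i).
split; [|split; [|split; [|split; [|split; [|split; [|split; [|split]]]]]]].
- split.
  + by exists (fun _ => 0); rewrite big1 // => i _; rewrite scale0r.
  + move=> y1 y2 [c1 ->] [c2 ->]; exists (fun i => c1 i + c2 i).
    by rewrite -big_split; apply: eq_bigr => i _; rewrite scalerDl.
  + move=> a y [c ->]; exists (fun i => a * c i).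
    by rewrite scaler_sumr; apply: eq_bigr => i _; rewrite scalerA.
- split.
  + by move=> i; rewrite hom0.
  + by move=> y1 y2 h1 h2 i; rewrite homD // h1 h2 addr0.
  + by move=> a y h1 i; rewrite homZ // h1 mulr0.
- move=> y [c ->] hy; rewrite big1 // => i _.
  by rewrite -(key c i) hy scale0r.
- move=> y; exists (\sum_(l < k) f l y *: x l), (y - \sum_(l < k) f l y *: x l).
  split => //; last by rewrite addrC subrK.
  by exists (fun l => f l y).
- move=> i; exists (fun l => (l == i :> nat)%:R).
  by rewrite (sum_delta_ord (fun l : 'I_k => x l)).
- by [].
- move=> c hc i; by rewrite -(key c i) hc hom0.
- by move=> y i; apply: hG.
- by move=> i; apply: hfE.
Qed.

Lemma summand_pe n F : free_E_summand E F n -> exists e : 'I_n -> M, exists p : 'I_n -> M -> R,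
  (forall i, F (e i)) /\ (forall i, E (p i)) /\ forall i j, p i (e j) = (i == j)%:R.
Proof.
move=> [G [e [p [hF [hG [hFG [hdec [hFe [hFc [hind [hGp hEp]]]]]]]]]]].
exists e, p; split => //; split => // i j.
set z := e j - \sum_(l < n) p l (e j) *: e l.
have hz0 : z = 0.
  apply: hFG; last exact: hGp.
  apply: submodB => //; apply: (submod_sum hF) => l _; exact: (submodZ hF).
have Hs : \sum_(l < n) ((fun l : 'I_n => (l == j :> nat)%:R - p l (e j)) l) *: e l = 0.
  under eq_bigr => l _ do rewrite scalerBl.
  rewrite sumrB (sum_delta_ord e); exact: hz0.
have H := hind _ Hs i.
apply/esym/subr0_eq; exact: H.
Qed.

Lemma summand_indep n F : free_E_summand E F n -> (forall y, F y -> genmod S y) ->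
  exists x, indep n x.
Proof.
move=> hF hsub; have [e [p [hFe [hEp hpe]]]] := summand_pe hF.
exists (fun i => match (insub i : option 'I_n) with Some j => e j | None => 0 end); split.
- move=> i _; case: (insub i) => [j|]; [apply: hsub; apply: hFe | exact: submod0 (submod_gen S)].
- move=> c hc i hi.
  have hp (j : 'I_n) : is_hom (p j) by apply: Ehom.
  move: hc; under eq_bigr => l _ do rewrite valK.
  move=> [_ hc]; have := hc _ (hEp (Ordinal hi)).
  rewrite hom_sum //; under eq_bigr => l _ do rewrite homZ // hpe.
  rewrite (bigD1 (Ordinal hi)) //= eqxx mulr1 big1 ?addr0 // => l hl.
  by rewrite eq_sym (negbTE hl) mulr0.
Qed.

End Main.

Lemma span_fin (R : comUnitRingType) (M : lmodType R) g (v : 'I_g -> M) y :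
  genmod (fun y => exists i, y = v i) y -> exists d : 'I_g -> R, y = \sum_(l < g) d l *: v l.
Proof.
move=> hy; apply: (gen_min (Q := fun y => exists d : 'I_g -> R, y = \sum_(l < g) d l *: v l) _ _ hy).
- split.
  + by exists (fun _ => 0); rewrite big1 // => i _; rewrite scale0r.
  + move=> y1 y2 [c1 ->] [c2 ->]; exists (fun i => c1 i + c2 i).
    by rewrite -big_split; apply: eq_bigr => i _; rewrite scalerDl.
  + move=> a y' [c ->]; exists (fun i => a * c i).
    by rewrite scaler_sumr; apply: eq_bigr => i _; rewrite scalerA.
- move=> z [i ->]; exists (fun l => (l == i :> nat)%:R).
  by rewrite (sum_delta_ord v).
Qed.

Lemma bound (R : comUnitRingType) (M : lmodType R) k (x : nat -> M) (f : nat -> M -> R) g (v : 'I_g -> M) :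
  (forall y, genmod (fun y => exists i, y = v i) y) ->
  (forall i, (i < k)%N -> is_hom (f i)) ->
  (forall i j, (i < k)%N -> (j < k)%N -> f i (x j) = (i == j)%:R) -> (k <= g)%N.
Proof.
move=> hv hh hf.
have hd (j : 'I_k) : {d : 'I_g -> R | x j = \sum_(l < g) d l *: v l}.
  by apply: constructive_indefinite_description; apply: span_fin.
pose P := \matrix_(i < k, l < g) f i (v l).
pose Q := \matrix_(l < g, j < k) sval (hd j) l.
apply: (@mulmx1_min _ _ _ P Q); apply/matrixP => i j; rewrite !mxE.
have hi := hh i (ltn_ord i).
under eq_bigr => l _ do rewrite !mxE mulrC -(homZ _ _ hi).
rewrite -hom_sum // -(svalP (hd j)) hf //.
Qed.

Lemma max_exists (P : nat -> Prop) b : P 0%N -> (forall k, P k -> (k <= b)%N) ->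
  exists d, P d /\ forall k, P k -> (k <= d)%N.
Proof.
elim: b => [|b IH] h0 hb; first by exists 0%N.
case: (classic (P b.+1)) => [hp | hn]; first by exists b.+1.
apply: IH => // k hk; move: (hb k hk); rewrite leq_eqVlt => /orP [/eqP e|//].
by rewrite e in hk.
Qed.

From mathcomp Require Import zify.

Section Chains.
Variables (R : comUnitRingType) (M : lmodType R) (S : M -> Prop) (E : (M -> R) -> Prop).
Hypothesis hloc : is_local R.
Hypothesis hE : hom_submod E.

Lemma chain_up d x : indep S E d x -> (forall k, (exists x, indep S E k x) -> (k <= d)%N) ->
  strict_chain (IE E S) (genmod S) d.
Proof.
move=> hx hmax.
have hIs := IE_submod S hloc hE.
have hGs := submod_gen S.
exists (fun j y => exists c : nat -> R, exists y0, IE E S y0 /\ y = y0 + \sum_(i < j) c i *: x i); split.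
- move=> j; split.
  + exists (fun _ => 0), 0; split; first exact: submod0 hIs.
    by rewrite big1 ?addr0 // => i _; rewrite scale0r.
  + move=> y1 y2 [c1 [z1 [h1 ->]]] [c2 [z2 [h2 ->]]].
    exists (fun i => c1 i + c2 i), (z1 + z2); split; first exact: submodD hIs h1 h2.
    have -> : \sum_(i < j) (c1 i + c2 i) *: x i = \sum_(i < j) c1 i *: x i + \sum_(i < j) c2 i *: x i.
      by rewrite -big_split; apply: eq_bigr => i _; rewrite scalerDl.
    by rewrite addrACA.
  + move=> a y [c [z [h ->]]]; exists (fun i => a * c i), (a *: z); split; first exact: submodZ hIs h.
    rewrite scalerDr scaler_sumr; congr (_ + _); apply: eq_bigr => i _; by rewrite scalerA.
- move=> y; split.
  + by move=> [c [z [h ->]]]; rewrite big_ord0 addr0.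
  + by move=> h; exists (fun _ => 0), y; split => //; rewrite big_ord0 addr0.
- move=> y; split.
  + move=> [c [z [[hz _] ->]]]; apply: (submodD hGs hz); apply: (submod_sum hGs) => i _.
    by apply: (submodZ hGs); exact: hx.1 _ (ltn_ord i).
  + move=> hy.
    have hn : ~ indep S E d.+1 (fun i => if (i < d)%N then x i else y).
      by move=> h; have := hmax _ (ex_intro _ _ h); rewrite ltnn.
    have [c [hc [i [hi hu]]]] : exists c : nat -> R, IE E S (\sum_(i < d.+1) c i *: (if (i < d)%N then x i else y)) /\
        exists i, (i < d.+1)%N /\ c i \is a GRing.unit.
      apply: NNPP => hne; apply: hn; split.
      * by move=> i hi; case: ifP => h; [exact: hx.1 _ h | exact: hy].
      * move=> c hc i hi; rewrite /maxideal; apply/negP => hu; apply: hne; exists c; split => //.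
        by exists i.
    move: hc; rewrite big_ord_recr /= ltnn; under eq_bigr => j _ do rewrite ltn_ord; move=> hc.
    case: (boolP (c d \is a GRing.unit)) => hud.
    * exists (fun i => - ((c d)^-1 * c i)), ((c d)^-1 *: (\sum_(j < d) c j *: x j + c d *: y)).
      split; first exact: submodZ hIs hc.
      rewrite scalerDr scalerA mulVr // scale1r scaler_sumr.
      have -> : \sum_(j < d) (- ((c d)^-1 * c j)) *: x j = - \sum_(j < d) ((c d)^-1 * c j) *: x j.
        by rewrite -sumrN; apply: eq_bigr => j _; rewrite scaleNr.
      have -> : \sum_(j < d) (c d)^-1 *: (c j *: x j) = \sum_(j < d) ((c d)^-1 * c j) *: x j.
        by apply: eq_bigr => j _; rewrite scalerA.
      by rewrite addrAC subrr add0r.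
    * have cy := IE_nuZ hE hud hy.
      have hs : IE E S (\sum_(j < d) c j *: x j).
        by have := submodB hIs hc cy; rewrite addrK.
      have H := hx.2 c hs.
      have [hid | hid] := ltnP i d.
      - by move: (H i hid); rewrite /maxideal hu.
      - have ei : i = d by apply/eqP; rewrite eqn_leq hid -ltnS hi.
        by move: hud; rewrite -ei hu.
- move=> j hj y [c [z [hz ->]]]; exists (fun i => if (i < j)%N then c i else 0), z; split => //.
  rewrite big_ord_recr /= ltnn scale0r addr0; congr (_ + _); apply: eq_bigr => i _; by rewrite ltn_ord.
- move=> j hj; exists (x j); split.
  + exists (fun i => (i == j)%:R), 0; split; first exact: submod0 hIs.
    rewrite add0r.
    have -> : \sum_(i < j.+1) (i == j :> nat)%:R *: x i = \sum_(i < j.+1) (if (i == j :> nat) then x i else 0).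
      by apply: eq_bigr => i _; case: eqP => _; rewrite ?scale1r ?scale0r.
    by rewrite (sum_delta x).
  + move=> [c [z [hz e]]].
    pose c2 := fun i => if (i < j)%N then - c i else if (i == j) then 1 else 0.
    have hs : \sum_(i < d) c2 i *: x i = z.
      have -> : \sum_(i < d) c2 i *: x i = \sum_(i < d) ((if (i < j)%N then - c i *: x i else 0) +
           (if (i == j :> nat) then x i else 0)).
        apply: eq_bigr => i _; rewrite /c2; case: ltngtP => h; by rewrite ?addr0 ?add0r ?scale0r ?scale1r.
      rewrite big_split /= (sum_ltn (fun i => - c i *: x i)) ?(ltnW hj) // (sum_delta x) // e.
      under eq_bigr => i _ do rewrite scaleNr.
      by rewrite sumrN addrC addrK.
    have hIE : IE E S (\sum_(i < d) c2 i *: x i) by rewrite hs.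
    by have := hx.2 c2 hIE j hj; rewrite /c2 ltnn eqxx /maxideal unitr1.
Qed.

Lemma chain_down k : strict_chain (IE E S) (genmod S) k -> exists x, indep S E k x.
Proof.
move=> [C [hsub h0 hk hinc hstr]].
have hIs := IE_submod S hloc hE.
have mono : forall m i y, (i + m <= k)%N -> C i y -> C (i + m)%N y.
  elim=> [|m IH] i y hm hy; first by rewrite addn0.
  rewrite addnS; apply: hinc; first by rewrite -addnS.
  by apply: IH => //; apply: ltnW; rewrite -addnS.
have le i j y : (i <= j)%N -> (j <= k)%N -> C i y -> C j y.
  by move=> hij hjk hy; rewrite -(subnKC hij); apply: mono => //; rewrite subnKC.
have low j y : (j <= k)%N -> IE E S y -> C j y.
  by move=> hj hy; apply: (le 0%N) => //; apply/h0.
have high j y : (j <= k)%N -> C j y -> genmod S y.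
  by move=> hj hy; apply/hk; apply: (le j).
have hex j : exists y, (j < k)%N -> C j.+1 y /\ ~ C j y.
  case: (ltnP j k) => h; last by exists 0.
  by have [y hy] := hstr j h; exists y.
pose xs := fun j => proj1_sig (constructive_indefinite_description _ (hex j)).
have hxs : forall j, (j < k)%N -> C j.+1 (xs j) /\ ~ C j (xs j) :=
  fun j => proj2_sig (constructive_indefinite_description _ (hex j)).
exists xs; split.
- by move=> i hi; apply: (high i.+1) => //; exact: (hxs i hi).1.
- move=> c hc.
  have step : forall i, (i < k)%N -> (forall l, (i < l)%N -> (l < k)%N -> maxideal (c l)) -> maxideal (c i).
    move=> i hi hl; rewrite /maxideal; apply/negP => hu.
    apply: (hxs i hi).2.
    have hA : C i (\sum_(l < k) (if (l < i)%N then c l *: xs l else 0)).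
      apply: (submod_sum (hsub i)) => l _; case: ifP => h; last exact: submod0 (hsub i).
      apply: (submodZ (hsub i)); apply: (le l.+1 i _ h (ltnW hi)).
      exact: (hxs l (ltn_trans h hi)).1.
    have hB : IE E S (\sum_(l < k) (if (i < l)%N then c l *: xs l else 0)).
      apply: (submod_sum hIs) => l _; case: ifP => h; last exact: submod0 hIs.
      apply: (IE_nuZ hE); first exact: hl _ h (ltn_ord l).
      by apply: (high l.+1) => //; exact: (hxs l (ltn_ord l)).1.
    have hsplit : \sum_(l < k) c l *: xs l = \sum_(l < k) (if (l < i)%N then c l *: xs l else 0)
        + c i *: xs i + \sum_(l < k) (if (i < l)%N then c l *: xs l else 0).
      rewrite -(sum_delta (fun l => c l *: xs l) hi) -!big_split /=; apply: eq_bigr => l _.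
      by case: ltngtP => h; rewrite ?addr0 ?add0r.
    have hci : C i (c i *: xs i).
      have htot : C i (\sum_(l < k) c l *: xs l) by apply: low => //; exact: ltnW hi.
      rewrite hsplit in htot.
      have := submodB (hsub i) htot (low i _ (ltnW hi) hB); rewrite addrK => h2.
      by have := submodB (hsub i) h2 hA; rewrite addrAC subrr add0r.
    by have := submodZ (a := (c i)^-1) (hsub i) hci; rewrite scalerA mulVr // scale1r.
  have all : forall m i, (k - m <= i)%N -> (i < k)%N -> maxideal (c i).
    elim=> [|m IH] i h1 h2; first by move: h1; rewrite subn0 leqNgt h2.
    apply: step => // l hil hlk; apply: IH => //; lia.
  by move=> i hi; apply: (all k) => //; rewrite subnn.
Qed.

End Chains.

Theorem lemma4p6 (R : comUnitRingType) (M : lmodType R)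
    (S : M -> Prop) (E : (M -> R) -> Prop) :
  is_local R -> noetherian R -> fin_gen (fun _ : M => True) ->
  hom_submod E ->
  exists d : nat, delta_is E S d /\ quot_length (genmod S) (IE E S) d.
Proof.
move=> hloc _ [g [v hv]] hE.
have hb : forall k, (exists x, indep S E k x) -> (k <= g)%N.
  move=> k [x hx]; have [f [hfE hf]] := dual hE hx.
  apply: (bound (x := x) (f := f) (v := v)) => //.
  - by move=> y; apply/(hv y).
  - by move=> i hi; apply: (Ehom hE); apply: hfE.
have h0 : exists x, indep S E 0 x by exists (fun _ => 0); split => // c _ i.
have [d [[x hx] hmax]] := max_exists h0 hb.
exists d; split; split.
- have [f [hfE hf]] := dual hE hx; exact: (build hE hx.1 hfE hf).
- move=> n F hF hsub; apply: hmax; exact: (summand_indep hE hF hsub).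
- exact: (chain_up hloc hE hx hmax).
- move=> k' hc; apply: hmax; exact: (chain_down hloc hE hc).
Qed.
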